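(* Let $0<\gamma'<\gamma$ and $\varepsilon>0$. For any finite class $\mathcal{H}$ of hypotheses $\{-1,+1\}^d\to\{-1,+1\}$, there exists an $\varepsilon$-sample-$\nabla_0$DP algorithm that, given a finite set $S$ of labeled examples, outputs $h^{priv}\in\mathcal{H}$ such that $$\mathbb{E}[\mathcal{R}_{\gamma'}(h^{priv};S)]\le\inf_{h\in\mathcal{H}}\mathcal{R}_\gamma(h;S)+O\!\left(\frac{\log|\mathcal{H}|}{\varepsilon(\gamma-\gamma')d\cdot|S|}\right).$$
   Context: Labeled examples are $(x,y)\in\{-1,+1\}^d\times\{-1,+1\}$. For a hypothesis $h$ and distribution $\mathcal{D}$, $\mathcal{R}_\gamma(h,\mathcal{D})=\Pr_{(x,y)\sim\mathcal{D}}[\exists\check x\in\{-1,+1\}^d: h(\check x)\ne y\wedge\|\check x-x\|_0\le\gamma d]$ with $\|\cdot\|_0$ the Hamming distance; $\mathcal{R}_\gamma(h;S)$ is this quantity for $\mathcal{D}$ uniform on $S$. An algorithm $M$ on datasets of labeled examples is $\varepsilon$-sample-$\nabla_0$DP if $\Pr[M(S)\in E]\le e^\varepsilon\Pr[M(S')\in E]$ for all $E$ whenever $S,S'$ differ only in a single coordinate of the feature vector of a single example (labels unchanged). *)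

(* Defs.v *)
From mathcomp Require Import all_boot all_order all_algebra.
From mathcomp Require Import all_classical all_reals all_analysis.
Set Implicit Arguments. Unset Strict Implicit. Unset Printing Implicit Defensive.
Import Order.TTheory GRing.Theory Num.Theory.
Local Open Scope ring_scope.

(* Feature vectors in {-1,+1}^d, encoded as bool (true = +1). *)
Definition feat (d : nat) := {ffun 'I_d -> bool}.
Definition example (d : nat) := (feat d * bool)%type.
Definition hyp (d : nat) := {ffun feat d -> bool}.

Definition hamming d (x x' : feat d) : nat := #|[set i | x i != x' i]|.

Definition robust_err (R : realType) d (gamma : R) (h : hyp d) (e : example d) : bool :=
  [exists x' : feat d, (h x' != e.2) && ((hamming x' e.1)%:R <= gamma * d%:R)].

Definition robust_risk (R : realType) d (gamma : R) (h : hyp d) (S : seq (example d)) : R :=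
  (count (robust_err gamma h) S)%:R / (size S)%:R.

(* A randomized algorithm with outputs in hyp d: dataset |-> probability mass function. *)
Definition mechanism (R : realType) d := seq (example d) -> {ffun hyp d -> R}.

Definition is_pmf (R : realType) d (p : {ffun hyp d -> R}) : Prop :=
  (forall h, 0 <= p h) /\ \sum_h p h = 1.

Definition default_example d : example d := ([ffun => false], false).

Definition sample_neighbors d (S S' : seq (example d)) : Prop :=
  size S = size S' /\
  exists k, (k < size S)%N /\
    (forall l, l != k -> nth (default_example d) S l = nth (default_example d) S' l) /\
    (nth (default_example d) S k).2 = (nth (default_example d) S' k).2 /\
    exists i : 'I_d, forall j : 'I_d, j != i ->
      (nth (default_example d) S k).1 j = (nth (default_example d) S' k).1 j.

Definition sample_DP (R : realType) d (eps : R) (M : mechanism R d) : Prop :=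
  forall S S', sample_neighbors S S' ->
    forall E : {set hyp d}, \sum_(h in E) M S h <= expR eps * \sum_(h in E) M S' h.

(* Main.v *)
Require Import Defs.
From mathcomp Require Import all_boot all_order all_algebra.
From mathcomp Require Import all_classical all_reals all_analysis.
From mathcomp Require Import lra ring.
Set Implicit Arguments. Unset Strict Implicit.
Import Order.TTheory GRing.Theory Num.Theory.
Local Open Scope ring_scope.

Definition clamp01 (R : realType) (t : R) : R :=
  if 1 <= t then 1 else if 0 <= t then t else 0.

Lemma clamp01_ge0 (R : realType) (t : R) : 0 <= clamp01 t.
Proof. rewrite /clamp01; case: ifP => _; first lra. case: ifP => //. Qed.

Lemma clamp01_le1 (R : realType) (t : R) : clamp01 t <= 1.
Proof. rewrite /clamp01; case: ifP => h1 //; case: ifP => _ //.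
move/negbT: h1; rewrite -ltNge => h; lra. Qed.

Lemma clamp01_1 (R : realType) (t : R) : 1 <= t -> clamp01 t = 1.
Proof. by rewrite /clamp01 => ->. Qed.

Lemma clamp01_0 (R : realType) (t : R) : t < 0 -> clamp01 t = 0.
Proof. rewrite /clamp01 => h. case: ifP => h1; first lra.
case: ifP => h2 //; lra. Qed.

Lemma clamp01_lip (R : realType) (t s c : R) : 0 <= c -> t <= s + c ->
  clamp01 t <= clamp01 s + c.
Proof.
rewrite /clamp01 => hc hts.
case: (lerP 1 t) => h1; case: (lerP 0 t) => h2; case: (lerP 1 s) => h3;
 case: (lerP 0 s) => h4; lra.
Qed.

Definition Tf (R : realType) (g' g : R) (d k : nat) : R :=
  (g * d%:R - k%:R) / ((g - g') * d%:R).

Definition phi (R : realType) (g' g : R) (d k : nat) : R := clamp01 (Tf g' g d k).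

Lemma Tf_lip (R : realType) (g' g : R) (d k k2 : nat) : g' < g -> (0 < d)%N ->
  (k2 <= k.+1)%N -> Tf g' g d k <= Tf g' g d k2 + 1 / ((g - g') * d%:R).
Proof.
move=> hg hd hk.
have hD : 0 < (g - g') * d%:R by apply: mulr_gt0; [lra| rewrite ltr0n].
have hk' : k2%:R <= k%:R + 1 :> R by rewrite natr1 ler_nat.
have E : (g * d%:R - k2%:R) / ((g - g') * d%:R) + 1 / ((g - g') * d%:R) = (g * d%:R - k2%:R + 1) / ((g - g') * d%:R) by rewrite [RHS]mulrDl.
rewrite /Tf E ler_pM2r ?invr_gt0 //. move: hk'. set a := k%:R. set b := k2%:R. set gd := g * d%:R. move=> hk'. lra.
Qed.

Lemma Tf_ge1 (R : realType) (g' g : R) (d k : nat) : g' < g -> (0 < d)%N ->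
  k%:R <= g' * d%:R -> 1 <= Tf g' g d k.
Proof.
move=> hg hd hk.
have hD : 0 < (g - g') * d%:R by apply: mulr_gt0; [lra| rewrite ltr0n].
rewrite /Tf ler_pdivlMr // mul1r. lra.
Qed.

Lemma Tf_lt0 (R : realType) (g' g : R) (d k : nat) : g' < g -> (0 < d)%N ->
  g * d%:R < k%:R -> Tf g' g d k < 0.
Proof.
move=> hg hd hk.
have hD : 0 < (g - g') * d%:R by apply: mulr_gt0; [lra| rewrite ltr0n].
rewrite /Tf ltr_pdivrMr // mul0r. lra.
Qed.

Lemma hamming_lip d (x' x x2 : feat d) (i : 'I_d) :
  (forall j, j != i -> x j = x2 j) -> (hamming x' x <= (hamming x' x2).+1)%N.
Proof.
move=> hx; rewrite /hamming.
have sub : [set j | x' j != x j] \subset i |: [set j | x' j != x2 j].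
  apply/fintype.subsetP => j; rewrite !inE.
  case: (eqVneq j i) => [->|hj] //=. by rewrite hx.
apply: (leq_trans (subset_leq_card sub)). rewrite cardsU1.
by case: (i \notin _).
Qed.

Definition ell (R : realType) (g' g : R) d (h : hyp d) (e : example d) : R :=
  \big[Num.max/0]_(x' | h x' != e.2) phi g' g d (hamming x' e.1).

Lemma ell_ge0 (R : realType) (g' g : R) d (h : hyp d) e : 0 <= ell g' g h e.
Proof. exact: bigmax_ge_id. Qed.

Lemma ell_lower (R : realType) (g' g : R) d (h : hyp d) e : g' < g -> (0 < d)%N ->
  (robust_err g' h e)%:R <= ell g' g h e.
Proof.
move=> hg hd. case hr: (robust_err g' h e); last exact: ell_ge0.
move/existsP: hr => [x' /andP [h1 h2]].
apply: (bigmax_sup x') => //.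
by rewrite /phi clamp01_1 //; apply: Tf_ge1.
Qed.

Lemma ell_upper (R : realType) (g' g : R) d (h : hyp d) e : g' < g -> (0 < d)%N ->
  ell g' g h e <= (robust_err g h e)%:R.
Proof.
move=> hg hd. case hr: (robust_err g h e).
  apply: bigmax_le => // x' _; exact: clamp01_le1.
apply: bigmax_le => // x' hx'.
move/negbT/existsPn: hr => /(_ x'). rewrite hx' /= -ltNge => hlt.
by rewrite /phi clamp01_0 //; apply: Tf_lt0.
Qed.

Lemma ell_lip (R : realType) (g' g : R) d (h : hyp d) (e e2 : example d) (i : 'I_d) :
  g' < g -> (0 < d)%N -> e.2 = e2.2 -> (forall j, j != i -> e.1 j = e2.1 j) ->
  ell g' g h e <= ell g' g h e2 + 1 / ((g - g') * d%:R).
Proof.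
move=> hg hd h2 h1.
have hD : 0 < (g - g') * d%:R by apply: mulr_gt0; [lra| rewrite ltr0n].
have hc : 0 <= 1 / ((g - g') * d%:R) by rewrite div1r invr_ge0 ltW.
apply: bigmax_le. have := ell_ge0 g' g h e2; lra.
move=> x' hx'.
have le1 : phi g' g d (hamming x' e.1) <= phi g' g d (hamming x' e2.1) + 1 / ((g - g') * d%:R).
  apply: clamp01_lip => //; apply: Tf_lip => //; apply: (@hamming_lip d x' e2.1 e.1 i) => j hj; by rewrite h1.
have le2 : phi g' g d (hamming x' e2.1) <= ell g' g h e2.
  apply: (bigmax_sup x'); by rewrite -?h2.
lra.
Qed.

Lemma gibbs (R : realType) (T : finType) (H : {set T}) (L : T -> R) (b : R) (h0 : T) :
  0 < b -> h0 \in H ->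
  \sum_h (if h \in H then expR (- b * L h) / \sum_(h' in H) expR (- b * L h') else 0) * L h
   <= L h0 + 4 * ln (#|H|%:R) / b.
Proof.
move=> hb hh0.
set Z := \sum_(h' in H) _.
pose p := fun h => if h \in H then expR (- b * L h) / Z else 0.
change (\sum_h p h * L h <= L h0 + 4 * ln (#|H|%:R) / b).
have hZ0 : expR (- b * L h0) <= Z.
  rewrite /Z (bigD1 h0) //= lerDl; apply: sumr_ge0 => i _; exact: ltW (expR_gt0 _).
have hZ : 0 < Z := lt_le_trans (expR_gt0 _) hZ0.
have hp0 h : 0 <= p h.
  rewrite /p; case: ifP => // _; apply: divr_ge0; [exact: ltW (expR_gt0 _)| exact: ltW].
have hp1 : \sum_h p h = 1.
  by rewrite /p -big_mkcond /= -mulr_suml divff // gt_eqF.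
set N : R := #|H|%:R.
have hN1 : 1 <= N by rewrite /N ler1n; apply/card_gt0P; exists h0.
have hN : 0 < N by lra.
have hlnN : 1 - N^-1 <= ln N.
  have := expR_ge1Dx (- ln N); rewrite expRN lnK ?posrE //; lra.
have hlnN0 : 0 <= ln N by exact: ln_ge0.
set a := 2 * ln N.
have ha : 0 <= a by rewrite /a; lra.
have key h : p h * (b * (L h - L h0)) <=
    p h * a + (if h \in H then 2 / N else 0) - (if h == h0 then 2 / N else 0).
  have hpa : 0 <= p h * a by apply: mulr_ge0.
  case: (eqVneq h h0) => [->|hne].
    rewrite hh0 subrr mulr0 mulr0. have : 0 <= p h0 * a by apply: mulr_ge0. lra.
  rewrite subr0.
  case hH: (h \in H); last by rewrite /p hH !mul0r addr0.
  have h2N : 0 <= 2 / N by apply: divr_ge0; lra.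
  set t := b * (L h - L h0).
  case: (lerP t a) => hta.
    have : p h * t <= p h * a by apply: ler_wpM2l.
    lra.
  have ht0 : 0 <= t by lra.
  have hph : p h <= expR (- t).
    rewrite /p hH.
    apply: (@le_trans _ _ (expR (- b * L h) / expR (- b * L h0))).
      apply: ler_wpM2l; first exact: ltW (expR_gt0 _).
      by rewrite lef_pV2 ?posrE // expR_gt0.
    rewrite -expRN -expRD /t. have -> : - b * L h - - b * L h0 = - (b * (L h - L h0)) by ring. by [].
  set u := expR (- (t / 2)).
  set v := expR (t / 2).
  have huv : u * v = 1 by rewrite /u /v -expRD addNr expR0.
  have hu0 : 0 < u by apply: expR_gt0.
  have hut : expR (- t) = u * u by rewrite /u -expRD -opprD -splitr.
  have htv : t / 2 <= v by have := expR_ge1Dx (t / 2); rewrite -/v; lra.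
  have h1 : t * (u * u) <= (2 * v) * (u * u).
    apply: ler_wpM2r; [by apply: mulr_ge0; lra | lra].
  have h2 : (2 * v) * (u * u) = 2 * u.
    have -> : (2 * v) * (u * u) = 2 * ((u * v) * u) by ring.
    by rewrite huv mul1r.
  have hun : u < N^-1.
    have <- : expR (- ln N) = N^-1 by rewrite expRN lnK // posrE.
    rewrite /u ltr_expR; rewrite /a in hta; lra.
  have h3 : p h * t <= expR (- t) * t by apply: ler_wpM2r.
  have h4 : 2 * u <= 2 / N by rewrite mulrC (mulrC 2); apply: ler_wpM2r; lra.
  rewrite hut in h3. lra.
have hsum : \sum_h p h * (b * (L h - L h0)) <= \sum_h (p h * a + (if h \in H then 2 / N else 0) - (if h == h0 then 2 / N else 0)).
  by apply: ler_sum => h _; exact: key.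
rewrite sumrB big_split /= -mulr_suml hp1 mul1r in hsum.
rewrite -big_mkcond /= sumr_const -mulr_natr in hsum.
rewrite -(big_mkcond (fun h => h == h0)) big_pred1_eq in hsum.
have E : \sum_h p h * (b * (L h - L h0)) = b * (\sum_h p h * L h) - (b * L h0) * (\sum_h p h).
  by rewrite !mulr_sumr -sumrB; apply: eq_bigr => h _; ring.
rewrite E hp1 mulr1 -/N in hsum.
have hNN : 2 / N * N = 2 by rewrite mulfVK // gt_eqF.

have hinv : 0 <= N^-1 by rewrite invr_ge0; lra.
have hb' : b * (\sum_h p h * L h - L h0) <= 4 * ln N.
  have : 2 / N = 2 * N^-1 by [].
  rewrite /a in hsum. lra.
rewrite -lerBlDl ler_pdivlMr // mulrC //.
Qed.

Definition Lsc (R : realType) (g' g : R) d (h : hyp d) (S : seq (example d)) : R :=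
  (\sum_(e <- S) ell g' g h e) / (size S)%:R.

Lemma sum_one_diff (R : realType) n (a b : 'I_n -> R) (K : 'I_n) (c : R) :
  (forall l, l != K -> a l = b l) -> a K <= b K + c ->
  \sum_l a l <= \sum_l b l + c.
Proof.
move=> hab hK.
rewrite (bigD1 K) //= [X in _ <= X + _](bigD1 K) //=.
rewrite (eq_bigr b); last by move=> l /hab.
lra.
Qed.

Lemma neighbors_sym d (S S' : seq (example d)) :
  sample_neighbors S S' -> sample_neighbors S' S.
Proof.
move=> [hsz [k [hk [hl [hlab [i hi]]]]]].
split; first by [].
exists k; split; first by rewrite -hsz.
split; first by move=> l /hl.
split; first by [].
by exists i => j /hi.
Qed.

Lemma Lsum_lip (R : realType) (g' g : R) d (h : hyp d) (S S' : seq (example d)) :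
  g' < g -> (0 < d)%N -> sample_neighbors S S' ->
  \sum_(e <- S) ell g' g h e <= \sum_(e <- S') ell g' g h e + 1 / ((g - g') * d%:R).
Proof.
move=> hg hd [hsz [k [hk [hl [hlab [i hi]]]]]].
rewrite !(big_nth (default_example d)) -hsz !big_mkord.
apply: (@sum_one_diff R _ _ _ (Ordinal hk)).
  move=> l hl'; rewrite hl //; apply: contra hl' => /eqP e; apply/eqP; exact: val_inj.
exact: (@ell_lip R g' g d h _ _ i).
Qed.

Lemma count_le (R : realType) (g' g : R) d (h : hyp d) (S : seq (example d)) :
  g' < g -> (0 < d)%N ->
  (count (robust_err g' h) S)%:R <= \sum_(e <- S) ell g' g h e.
Proof.
move=> hg hd; elim: S => [|e S IH]; first by rewrite big_nil.
rewrite big_cons /= natrD; apply: lerD => //; exact: ell_lower.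
Qed.

Lemma sum_le_count (R : realType) (g' g : R) d (h : hyp d) (S : seq (example d)) :
  g' < g -> (0 < d)%N ->
  \sum_(e <- S) ell g' g h e <= (count (robust_err g h) S)%:R.
Proof.
move=> hg hd; elim: S => [|e S IH]; first by rewrite big_nil.
rewrite big_cons /= natrD; apply: lerD => //; exact: ell_upper.
Qed.

Lemma rr_le_Lsc (R : realType) (g' g : R) d (h : hyp d) (S : seq (example d)) :
  g' < g -> (0 < d)%N -> robust_risk g' h S <= Lsc g' g h S.
Proof.
move=> hg hd; rewrite /robust_risk /Lsc; apply: ler_wpM2r; first by rewrite invr_ge0.
exact: count_le.
Qed.

Lemma Lsc_le_rr (R : realType) (g' g : R) d (h : hyp d) (S : seq (example d)) :
  g' < g -> (0 < d)%N -> Lsc g' g h S <= robust_risk g h S.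
Proof.
move=> hg hd; rewrite /robust_risk /Lsc; apply: ler_wpM2r; first by rewrite invr_ge0.
exact: sum_le_count.
Qed.

Definition beta (R : realType) (eps g' g : R) (d n : nat) : R :=
  eps * (g - g') * d%:R * n%:R / 2.

Definition mech (R : realType) d (H : {set hyp d}) (eps g' g : R) : mechanism R d :=
  fun S => [ffun h => if h \in H then
     expR (- beta eps g' g d (size S) * Lsc g' g h S) /
       \sum_(h' in H) expR (- beta eps g' g d (size S) * Lsc g' g h' S) else 0].

Lemma Zpos (R : realType) (T : finType) (H : {set T}) (f : T -> R) (h : T) :
  h \in H -> 0 < \sum_(h' in H) expR (f h').
Proof.
move=> hh; apply: (@lt_le_trans _ _ (expR (f h))); first exact: expR_gt0.
rewrite (bigD1 h) //= lerDl; apply: sumr_ge0 => i _; exact: ltW (expR_gt0 _).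
Qed.

Lemma weight_lip (R : realType) (eps g' g : R) d (h : hyp d) (S S' : seq (example d)) :
  g' < g -> (0 < d)%N -> 0 < eps -> sample_neighbors S S' ->
  expR (- beta eps g' g d (size S) * Lsc g' g h S) <=
  expR (eps / 2) * expR (- beta eps g' g d (size S') * Lsc g' g h S').
Proof.
move=> hg hd he hn.
have hn' := neighbors_sym hn.
have hL := Lsum_lip h hg hd hn'.
case: hn => hsz [k [hk _]].
rewrite -expRD ler_expR -hsz.
set n := size S in hsz hk hL *.
have hn0 : 0 < n%:R :> R by rewrite ltr0n; apply: leq_ltn_trans hk.
have hD : 0 < (g - g') * d%:R by apply: mulr_gt0; [lra| rewrite ltr0n].
set c := 1 / ((g - g') * d%:R) in hL.
have hLs : Lsc g' g h S' <= Lsc g' g h S + c / n%:R.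
  rewrite /Lsc -hsz -/n -mulrDl; apply: ler_wpM2r => //; by rewrite invr_ge0 ltW.
have hb : 0 <= beta eps g' g d n.
  rewrite /beta; apply: mulr_ge0; last lra.
  repeat apply: mulr_ge0; try lra; by rewrite ler0n.
have hbc : beta eps g' g d n * (c / n%:R) = eps / 2.
  rewrite /beta /c; field.
  have hd0 : 0 < d%:R :> R by rewrite ltr0n.
  have hg0 : 0 < g - g' by lra.
  by rewrite (gt_eqF hn0) (gt_eqF hd0) (gt_eqF hg0).
have : beta eps g' g d n * Lsc g' g h S' <= beta eps g' g d n * (Lsc g' g h S + c / n%:R).
  exact: ler_wpM2l.
rewrite mulrDr hbc.
set A := beta eps g' g d n * Lsc g' g h S'.
set B := beta eps g' g d n * Lsc g' g h S.
have -> : - beta eps g' g d n * Lsc g' g h S = - B by rewrite /B mulNr.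
have -> : - beta eps g' g d n * Lsc g' g h S' = - A by rewrite /A mulNr.
lra.
Qed.

Theorem lemma6p4 : forall R : realType, exists C : R, 0 < C /\
  forall (d : nat) (gamma' gamma eps : R) (H : {set hyp d}),
    (0 < d)%N -> 0 < gamma' -> gamma' < gamma -> 0 < eps -> (0 < #|H|)%N ->
    exists M : mechanism R d,
      sample_DP eps M /\
      (forall S, is_pmf (M S)) /\
      (forall S h, h \notin H -> M S h = 0) /\
      forall S : seq (example d), S != [::] ->
        forall h0, h0 \in H ->
          \sum_h M S h * robust_risk gamma' h S
            <= robust_risk gamma h0 S
               + C * (ln (#|H|%:R) / (eps * (gamma - gamma') * d%:R * (size S)%:R)).
Proof.
move=> R; exists 8; split; first by [].
move=> d g' g eps H hd hg'0 hg he hH.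
case/card_gt0P: (hH) => h1 hh1.
exists (mech H eps g' g).
split.
  move=> S S' hn E.
  rewrite mulr_sumr; apply: ler_sum => h _.
  rewrite /mech !ffunE; case: ifP => hhH; last by rewrite mulr0.
  set w1 := expR (- beta eps g' g d (size S) * Lsc g' g h S).
  set w2 := expR (- beta eps g' g d (size S') * Lsc g' g h S').
  set Z1 := \sum_(h' in H) _.
  set Z2 := \sum_(h' in H) _.
  set a := expR (eps / 2).
  have ha : 0 < a by apply: expR_gt0.
  have hw1 : w1 <= a * w2 by apply: weight_lip.
  have hw2 : 0 <= w2 by apply: ltW; apply: expR_gt0.
  have hZ1 : 0 < Z1 by apply: (Zpos _ hhH).
  have hZ2 : 0 < Z2 by apply: (Zpos _ hhH).
  have hZ : Z2 <= a * Z1.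
    rewrite /Z2 /Z1 mulr_sumr; apply: ler_sum => h' _.
    apply: weight_lip => //; exact: neighbors_sym.
  have hea : expR eps = a * a by rewrite /a -expRD -splitr.
  rewrite hea ler_pdivrMr //.
  have hq : 1 <= a * Z1 / Z2 by rewrite ler_pdivlMr // mul1r.
  have -> : a * a * (w2 / Z2) * Z1 = (a * w2) * (a * Z1 / Z2) by ring.
  apply: (le_trans hw1).
  rewrite -[X in X <= _]mulr1; apply: ler_wpM2l => //.
  by apply: mulr_ge0 => //; apply: ltW.
split.
  move=> S; split.
    move=> h; rewrite /mech ffunE; case: ifP => // hhH.
    apply: divr_ge0; first exact: ltW (expR_gt0 _).
    exact: ltW (Zpos _ hhH).
  rewrite /mech; under eq_bigr do rewrite ffunE.
  rewrite -big_mkcond /= -mulr_suml divff //.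
  by rewrite gt_eqF //; exact: (Zpos _ hh1).
split.
  by move=> S h hh; rewrite /mech ffunE (negbTE hh).
move=> S hS h0 hh0.
have hn0 : 0 < (size S)%:R :> R by rewrite ltr0n lt0n size_eq0.
have hb : 0 < beta eps g' g d (size S).
  rewrite /beta; apply: mulr_gt0; last lra.
  repeat apply: mulr_gt0; try lra; by rewrite ltr0n.
apply: (@le_trans _ _ (\sum_h mech H eps g' g S h * Lsc g' g h S)).
  apply: ler_sum => h _; apply: ler_wpM2l; last exact: rr_le_Lsc.
  rewrite /mech ffunE; case: ifP => // hhH.
  apply: divr_ge0; first exact: ltW (expR_gt0 _).
  exact: ltW (Zpos _ hhH).
have -> : \sum_h mech H eps g' g S h * Lsc g' g h S =
   \sum_h (if h \in H then expR (- beta eps g' g d (size S) * (fun h => Lsc g' g h S) h) /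
       \sum_(h' in H) expR (- beta eps g' g d (size S) * (fun h => Lsc g' g h S) h') else 0)
       * (fun h => Lsc g' g h S) h.
  by apply: eq_bigr => h _; rewrite /mech ffunE.
apply: (le_trans (@gibbs R _ H (fun h => Lsc g' g h S) _ h0 hb hh0)).
have hL := Lsc_le_rr h0 S hg hd.
have -> : 4 * ln (#|H|%:R : R) / beta eps g' g d (size S) =
   8 * (ln (#|H|%:R) / (eps * (g - g') * d%:R * (size S)%:R)).
  rewrite /beta; field.
  have hd0 : 0 < d%:R :> R by rewrite ltr0n.
  have hg0 : 0 < g - g' by lra.
  by rewrite (gt_eqF hn0) (gt_eqF hd0) (gt_eqF hg0) (gt_eqF he).
lra.
Qed.
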